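(* Let $T$ be a finite graph such that every graph homomorphism $T\to T$ is an automorphism (i.e. $\mathrm{End}(T)=\mathrm{Aut}(T)$). If there is a path component of $\mathrm{Hom}(T,K_{\chi(T)})$ which is invariant under the action of $\mathrm{Aut}(T)$ (acting by $f\mapsto f\circ\gamma$), then there exists a graph $G$ with $\chi(G)=\chi(T)$ such that $\mathrm{Hom}(T,G)$ is non-empty and connected.
   Context: Graphs are pairs $(V(G),E(G))$ with $E(G)\subseteq V(G)\times V(G)$ a symmetric relation (loops allowed); a graph homomorphism $f\colon G\to H$ is a map $V(G)\to V(H)$ with $(f(u),f(v))\in E(H)$ for all $(u,v)\in E(G)$. $K_r$ is the complete graph on $r$ vertices without loops, $\chi$ the chromatic number. For graphs $T,G$, $\mathrm{Hom}(T,G)$ is a cell complex whose vertices are the graph homomorphisms $T\to G$, and two homomorphisms are joined by an edge if and only if they differ at exactly one vertex of $T$; path components and connectedness may be computed in the graph formed by these vertices and edges; ''connected'' means non-empty and path-connected. *)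

(* Defs.v *)
From mathcomp Require Import all_boot.
Set Implicit Arguments. Unset Strict Implicit. Unset Printing Implicit Defensive.

Definition sym_graph (V : finType) (e : rel V) : Prop := symmetric e.

Definition is_hom (T V : finType) (eT : rel T) (eV : rel V) (f : T -> V) : Prop :=
  forall u v, eT u v -> eV (f u) (f v).

Definition is_homb (T V : finType) (eT : rel T) (eV : rel V) (f : {ffun T -> V}) : bool :=
  [forall u, forall v, eT u v ==> eV (f u) (f v)].

Definition Kedge (n : nat) : rel 'I_n := fun x y => x != y.

Definition chromatic (T : finType) (eT : rel T) (n : nat) : Prop :=
  (exists f : T -> 'I_n, is_hom eT (@Kedge n) f) /\
  (forall m (g : T -> 'I_m), is_hom eT (@Kedge m) g -> n <= m).

Definition is_aut (T : finType) (eT : rel T) (g : T -> T) : Prop :=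
  exists h : T -> T, [/\ cancel g h, cancel h g, is_hom eT eT g & is_hom eT eT h].

(* Edges of (the 1-skeleton of) Hom(T,V): two homs differing at exactly one vertex *)
Definition hom_adj (T V : finType) (eT : rel T) (eV : rel V) : rel {ffun T -> V} :=
  fun f g => [&& is_homb eT eV f, is_homb eT eV g & #|[set x | f x != g x]| == 1].

Definition hom_conn (T V : finType) (eT : rel T) (eV : rel V) (f g : {ffun T -> V}) : bool :=
  connect (hom_adj eT eV) f g.

Definition hom_connected (T V : finType) (eT : rel T) (eV : rel V) : Prop :=
  (exists f : {ffun T -> V}, is_homb eT eV f) /\
  (forall f g : {ffun T -> V}, is_homb eT eV f -> is_homb eT eV g -> hom_conn eT eV f g).

(* Main.v *)
Require Import Defs.
From mathcomp Require Import all_boot zify.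
Set Implicit Arguments. Unset Strict Implicit. Unset Printing Implicit Defensive.

Section Gen.
Variables (T V : finType) (eT : rel T) (eV : rel V).
Hypotheses (sT : symmetric eT) (sV : symmetric eV).

Lemma homP (f : {ffun T -> V}) : reflect (is_hom eT eV f) (is_homb eT eV f).
Proof.
apply: (iffP forallP) => [H u v Huv | H u].
  by move: (H u) => /forallP /(_ v) /implyP; apply.
by apply/forallP => v; apply/implyP; apply: H.
Qed.

Lemma hom_adj_sym : symmetric (hom_adj eT eV).
Proof.
move=> f g; rewrite /hom_adj andbCA; congr [&& _, _ & _].
by congr (_ == 1); apply: eq_card => x; rewrite !inE eq_sym.
Qed.

Lemma hom_conn_sym (f g : {ffun T -> V}) : hom_conn eT eV f g = hom_conn eT eV g f.
Proof. by rewrite /hom_conn (sym_connect_sym hom_adj_sym). Qed.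

Lemma hom_conn_trans (f g h : {ffun T -> V}) :
  hom_conn eT eV f g -> hom_conn eT eV g h -> hom_conn eT eV f h.
Proof. exact: connect_trans. Qed.

Lemma mix (b a : {ffun T -> V}) : is_homb eT eV a -> is_homb eT eV b ->
  (forall u v, eT u v -> eV (a u) (b v)) -> hom_conn eT eV a b.
Proof.
move=> ha hb.
have main : forall N (a : {ffun T -> V}), #|[set t | a t != b t]| <= N ->
  is_homb eT eV a -> (forall u v, eT u v -> eV (a u) (b v)) -> hom_conn eT eV a b.
  elim=> [|N IH] a' hN ha' hc.
    have -> : a' = b; last exact: connect0.
    apply/ffunP => t; apply/eqP; apply: contraT => hne.
    by move: hN; rewrite leqn0 => /eqP/cards0_eq/setP/(_ t); rewrite !inE hne.
  case: (set_0Vmem [set t | a' t != b t]) => [E|[x]].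
    have -> : a' = b; last exact: connect0.
    apply/ffunP => t; apply/eqP; apply: contraT => hne.
    by move/setP: E => /(_ t); rewrite !inE hne.
  rewrite inE => hx.
  pose a2 := [ffun t => if t == x then b x else a' t].
  have ha2 : is_homb eT eV a2.
    apply/homP => u v huv; rewrite !ffunE.
    case: (eqVneq u x) => [eu|hu]; case: (eqVneq v x) => [ev|hv].
    - by move/homP: hb; apply; rewrite -{1}eu -ev.
    - by rewrite sV; apply: hc; rewrite sT -eu.
    - by apply: hc; rewrite -ev.
    - by move/homP: ha'; apply.
  have Ed : [set t | a' t != a2 t] = [set x].
    apply/setP => t; rewrite !inE ffunE.
    by case: (eqVneq t x) => [->|_]; rewrite ?hx ?eqxx.
  apply: (connect_trans (connect1 _)) (IH a2 _ ha2 _).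
  - by rewrite /hom_adj ha' ha2 Ed cards1.
  - have Es : [set t | a2 t != b t] = [set t | a' t != b t] :\ x.
      apply/setP => t; rewrite !inE ffunE.
      by case: (eqVneq t x) => [->|_]; rewrite ?eqxx.
    by rewrite Es; move: hN; rewrite (cardsD1 x [set t | a' t != b t]) inE hx add1n ltnS.
  - move=> u v huv; rewrite ffunE; case: (eqVneq u x) => [eu|_]; last exact: hc.
    by move/homP: hb; apply; rewrite -eu.
by apply: main.
Qed.
End Gen.

Section Main.
Variables (T : finType) (eT : rel T) (n : nat).
Hypothesis sT : symmetric eT.
Hypothesis noloop : forall x, ~~ eT x x.

Variable K : nat.
Hypothesis hK : #|T| + #|{ffun T -> 'I_n}| + 2 <= K.
Local Notation kk := K.+1.
Definition D := option ({ffun T -> T} * 'I_kk)%type.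
Definition VV := (T * D)%type.
Definition homb (g : {ffun T -> T}) := is_homb eT eT g.

Definition eG : rel VV := fun x y =>
  let: (s, d) := x in let: (s', d') := y in
  match d, d' with
  | None, None => eT s s'
  | Some (g, i), Some (g', i') =>
      [&& g == g', (i == i' :> nat) || (i.+1 == i') || (i'.+1 == i) & eT s s']
  | Some (g, i), None => ((i == 0 :> nat) && eT s s') || [&& i.+1 == kk, homb g & eT (g s) s']
  | None, Some (g, i) => ((i == 0 :> nat) && eT s s') || [&& i.+1 == kk, homb g & eT (g s') s]
  end.

Lemma eG_sym : symmetric eG.
Proof.
move=> [s d] [s' d']; case: d => [[g i]|]; case: d' => [[g' i']|] //=.
all: try by rewrite sT.
rewrite eq_sym sT; congr [&& _, _ & _]; rewrite [i' == i :> nat]eq_sym.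
by case: (i == i' :> nat) => //=; rewrite orbC.
Qed.

Definition ht (J : {ffun T -> T} -> 'I_kk) (d : D) : nat :=
  if d is Some (g, i) then (if homb g && (J g < i) then kk - i else i.+1) else 0.

Definition step (J : {ffun T -> T} -> 'I_kk) (x : VV) : VV :=
  let: (s, d) := x in
  if d is Some (g, i) then
    if homb g && (J g < i) then (if i.+1 == kk then (g s, None) else (s, Some (g, inord i.+1)))
    else (if i == 0 :> nat then (s, None) else (s, Some (g, inord i.-1)))
  else x.

Definition cutinv (J : {ffun T -> T} -> 'I_kk) (x : VV) := forall g, homb g -> x.2 != Some (g, J g).

Lemma kk_ge3 : 3 <= kk. Proof. move: hK; lia. Qed.

Lemma homb_hom g u v : homb g -> eT u v -> eT (g u) (g v).
Proof. by move=> /forallP /(_ u) /forallP /(_ v) /implyP. Qed.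

Lemma step_ok J (x y : VV) g i : x.2 = Some (g, i) -> cutinv J x -> cutinv J y ->
  eG x y -> ht J y.2 <= ht J x.2 -> eG (step J x) y.
Proof.
have k3 := kk_ge3.
move: x y => [sx dx] [sv dv] /= Ex hx hy; subst dx.
have hxJ : homb g -> (J g != i :> nat).
  by move=> hg; move: (hx g hg); apply: contra => /eqP /val_inj ->.
have hi := ltn_ord i.
have hJk := ltn_ord (J g).
rewrite /ht /step /=.
case: dv hy => [[g' i']|] hy /=.
- move=> /and3P[/eqP eg hii he]; subst g'.
  have hyJ : homb g -> (J g != i' :> nat).
    by move=> hg; move: (hy g hg); apply: contra => /eqP /val_inj ->.
  have hi' := ltn_ord i'.
  have sideL : (i' <= i) -> eG (if i == 0 :> nat then (sx, None) else (sx, Some (g, inord i.-1)))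
                              (sv, Some (g, i')).
    move=> hle; case: (eqVneq (i : nat) 0) => hi0 /=.
      by rewrite he andbT; apply/orP; left; lia.
    rewrite eqxx he andbT inordK; last by lia.
    lia.
  case hg: (homb g) => /=.
  + move: (hxJ hg) (hyJ hg) => {}hxJ {}hyJ.
    case hJi: (J g < i) => /=.
    * case: (eqVneq i.+1 kk) => hik /=.
      - case: ifP => hJ' hle; last by lia.
        have ei : (i' = i :> nat) by lia.
        apply/orP; right; rewrite ei hik eqxx hg /=.
        by apply: homb_hom; rewrite // sT.
      - rewrite inordK; last by lia.
        rewrite eqxx he andbT /=.
        by case: ifP => hJ' hle; lia.
    * case: ifP => hJ' hle; first by lia.
      apply: sideL => //; lia.
  + move=> hle; apply: sideL => //; lia.
- case hg: (homb g) => /=; last first.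
    case: (eqVneq (i : nat) 0) => hi0 /=; last by rewrite andbF.
    by rewrite andbF orbF.
  move: (hxJ hg) => {}hxJ.
  case hJi: (J g < i) => /=.
    have hi0 : (i == 0 :> nat) = false by lia.
    rewrite hi0 /= => /andP[/eqP -> he] _; by rewrite eqxx.
  case: (eqVneq (i : nat) 0) => hi0 /=.
    move=> /orP[he _|/andP[/eqP]]; [exact: he | lia].
  by move=> /andP[/eqP]; lia.
Qed.

Lemma step_facts J (x : VV) g i : x.2 = Some (g, i) -> cutinv J x ->
  [/\ ht J (step J x).2 = (ht J x.2).-1, 0 < ht J x.2, step J x != x & cutinv J (step J x)].
Proof.
have k3 := kk_ge3.
move: x => [sx dx] /= Ex hx; subst dx.
have hxJ : homb g -> (J g != i :> nat).
  by move=> hg; move: (hx g hg); apply: contra => /eqP /val_inj ->.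
have hi := ltn_ord i.
have hJk := ltn_ord (J g).
have Hne : forall (s : T) (j : 'I_kk), (j != i :> nat) -> (s, Some (g, j)) != (sx, Some (g, i)) :> VV.
  move=> s j hj; apply/negP => /eqP [] _ /(congr1 val) /= ej.
  by move: hj; rewrite ej eqxx.
have Hcut : forall s (j : 'I_kk), (homb g -> j != J g :> nat) -> cutinv J (s, Some (g, j)).
  move=> s j hj g' hg'; apply/negP => /eqP [] eg; subst g' => /(congr1 val) /= ej.
  by move: (hj hg'); rewrite ej eqxx.
rewrite /ht /step /=.
case hg: (homb g) => /=.
- move: (hxJ hg) => {}hxJ.
  case hJi: (J g < i) => /=.
  + case: (eqVneq i.+1 kk) => hik /=.
    * split => //; try lia.
      by rewrite xpair_eqE andbF.
    * have hin : (inord i.+1 : 'I_kk) = i.+1 :> nat by rewrite inordK //; lia.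
      rewrite hg hin.
      have -> : (J g < i.+1) = true by lia.
      split => //=; try lia.
      - by apply: Hne; rewrite hin; lia.
      - by apply: Hcut => _; rewrite hin; lia.
  + case: (eqVneq (i : nat) 0) => hi0 /=.
      split => //; try lia.
      by rewrite xpair_eqE andbF.
    have hin : (inord i.-1 : 'I_kk) = i.-1 :> nat by rewrite inordK //; lia.
    rewrite hg hin.
    have -> : (J g < i.-1) = false by lia.
    split => //=; try lia.
    - by apply: Hne; rewrite hin; lia.
    - by apply: Hcut => _; rewrite hin; lia.
- case: (eqVneq (i : nat) 0) => hi0 /=.
    split => //; try lia.
    by rewrite xpair_eqE andbF.
  have hin : (inord i.-1 : 'I_kk) = i.-1 :> nat by rewrite inordK //; lia.
  rewrite hg hin.
  split => //=; try lia.
  - by apply: Hne; rewrite hin; lia.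
  - by apply: Hcut; rewrite hg.
Qed.




Lemma ht0 J d : ht J d = 0 -> d = None.
Proof.
case: d => [[g i]|] //=; have := ltn_ord i; case: (homb g && (J g < i)) => /=; lia.
Qed.

Lemma base_case J (h : {ffun T -> VV}) : is_homb eT eG h -> \sum_t ht J (h t).2 = 0 ->
  exists2 psi : {ffun T -> T}, homb psi & hom_conn eT eG h [ffun t => (psi t, None)].
Proof.
move=> hh /eqP; rewrite sum_nat_eq0 => /forallP H.
have HN : forall t, (h t).2 = None by move=> t; apply: (ht0 (J := J)); apply/eqP; exact: H.
exists [ffun t => (h t).1].
  apply/forallP => u; apply/forallP => v; apply/implyP => huv; rewrite !ffunE.
  move/homP: hh => /(_ u v huv).
  by case: (h u) (HN u) => su du /= ->; case: (h v) (HN v) => sv dv /= ->.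
have Eh : h = [ffun t => ([ffun t => (h t).1] t, None)].
  apply/ffunP => t; rewrite !ffunE.
  by case: (h t) (HN t) => st dt /= ->.
by rewrite {1}Eh; apply: connect0.
Qed.

Lemma fold J N (h : {ffun T -> VV}) : is_homb eT eG h -> (forall t, cutinv J (h t)) ->
  \sum_t ht J (h t).2 <= N ->
  exists2 psi : {ffun T -> T}, homb psi & hom_conn eT eG h [ffun t => (psi t, None)].
Proof.
elim: N h => [|N IH] h hh hc hs.
  by apply: (@base_case J h hh); move: hs; rewrite leqn0 => /eqP.
case: (eqVneq (\sum_t ht J (h t).2) 0) => hs0; first exact: (@base_case J h hh).
move: (hs0); rewrite sum_nat_eq0 => /forallPn [t0 /= ht0].
case: (@arg_maxnP _ t0 predT (fun y => ht J (h y).2) isT) => x _ Hmax.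
have hxpos : 0 < ht J (h x).2.
  by move: (Hmax t0 isT) ht0; lia.
case E: (h x).2 hxpos => [[g i]|] hxpos; last by [].
have [Sht Spos Sne Scut] := step_facts E (hc x).
pose h2 := [ffun t => if t == x then step J (h x) else h t].
have hh2 : is_homb eT eG h2.
  apply/homP => u v huv; rewrite !ffunE.
  case: (eqVneq u x) => [eu|hu]; case: (eqVneq v x) => [ev|hv].
  - by move: (noloop u); rewrite {2}eu -ev huv.
  - apply: (step_ok E (hc x) (hc v)); last exact: Hmax.
    by move/homP: hh; apply; rewrite -eu.
  - rewrite eG_sym; apply: (step_ok E (hc x) (hc u)); last exact: Hmax.
    by move/homP: hh; apply; rewrite -ev sT.
  - by move/homP: hh; apply.
have Ed : [set t | h t != h2 t] = [set x].
  apply/setP => t; rewrite !inE ffunE.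
  by case: (eqVneq t x) => [->|_]; rewrite ?eqxx // eq_sym.
have hc2 : forall t, cutinv J (h2 t).
  by move=> t; rewrite ffunE; case: (t == x).
have hs2 : \sum_t ht J (h2 t).2 <= N.
  rewrite (bigD1 x) //= in hs; rewrite (bigD1 x) //= ffunE eqxx.
  rewrite (eq_bigr (fun t => ht J (h t).2)); last first.
    by move=> t /negbTE htx; rewrite ffunE htx.
  move: hs Spos; rewrite Sht; case: (ht J (h x).2) => [|a] //= hs _.
have [psi hpsi hconn] := IH h2 hh2 hc2 hs2.
exists psi => //; apply: (connect_trans (connect1 _) hconn).
by rewrite /hom_adj hh hh2 Ed cards1.
Qed.


Hypothesis hEA : forall g : T -> T, is_hom eT eT g -> is_aut eT g.

Lemma cut_exists (h : {ffun T -> VV}) :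
  exists J : {ffun T -> T} -> 'I_kk, forall t, cutinv J (h t).
Proof.
have H : forall g : {ffun T -> T}, exists j : 'I_kk, [forall t, (h t).2 != Some (g, j)].
  move=> g; case: (boolP [exists j : 'I_kk, [forall t, (h t).2 != Some (g, j)]]).
    by move/existsP.
  move/existsPn => Hall; exfalso.
  pose pos (t : T) : 'I_kk := if (h t).2 is Some (_, i) then i else ord0.
  have sub : 'I_kk \subset codom pos.
    apply/subsetP => j _; move: (Hall j) => /forallPn [t]; rewrite negbK => /eqP Et.
    by apply/codomP; exists t; rewrite /pos Et.
  have := subset_leq_card sub; rewrite card_ord => H1.
  have := leq_image_card pos T; rewrite cardT => H2.
  have H3 : #|codom pos| <= #|T|.
    by apply: leq_trans (leq_image_card pos T) _; rewrite cardT.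
  have H4 := leq_trans H1 H3. move: hK H4; lia.
have [J HJ] := fin_all_exists H.
exists J => t g _; move/forallP: (HJ g); apply.
Qed.

Lemma to_base (psi : {ffun T -> T}) : homb psi ->
  hom_conn eT eG [ffun t => (psi t, None)] [ffun t => (t, None)].
Proof.
move=> hpsi.
have [phi [c1 c2 hp hph]] : is_aut eT psi.
  apply: hEA => u v huv; exact: homb_hom.
pose gam := [ffun t => phi t].
have hg : homb gam.
  by apply/forallP => u; apply/forallP => v; apply/implyP => huv; rewrite !ffunE; apply: hph.
pose a (i : nat) := [ffun t => (psi t, Some (gam, (inord i : 'I_kk)))].
have ha : forall i, is_homb eT eG (a i).
  move=> i; apply/homP => u v huv; rewrite !ffunE /= !eqxx /=.
  exact: homb_hom.
have hb0 : is_homb eT eG [ffun t => (psi t, None)].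
  by apply/homP => u v huv; rewrite !ffunE /=; apply: homb_hom.
have he : is_homb eT eG [ffun t => (t, None)].
  by apply/homP => u v huv; rewrite !ffunE.
have hK1 := kk_ge3.
have step0 : hom_conn eT eG [ffun t => (psi t, None)] (a 0).
  apply: (mix sT eG_sym) => // u v huv; rewrite !ffunE /= inordK //.
  by rewrite eqxx /= homb_hom.
have stepi : forall i, i <= K -> hom_conn eT eG [ffun t => (psi t, None)] (a i).
  elim=> [|i IH] hi //.
  apply: hom_conn_trans (IH (ltnW hi)) _.
  apply: (mix sT eG_sym) => // u v huv; rewrite !ffunE /= eqxx /= inordK; last by lia.
  rewrite inordK; last by lia.
  by rewrite eqxx orbT /= homb_hom.
apply: hom_conn_trans (stepi K (leqnn K)) _.
apply: (mix sT eG_sym) => // u v huv; rewrite !ffunE /= inordK //.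
apply/orP; right; rewrite eqxx hg /= ffunE c1.
done.
Qed.


Lemma all_conn (h : {ffun T -> VV}) : is_homb eT eG h ->
  hom_conn eT eG h [ffun t => (t, None)].
Proof.
move=> hh; have [J HJ] := cut_exists h.
have [psi hpsi hc] := fold hh HJ (leqnn _).
exact: hom_conn_trans hc (to_base hpsi).
Qed.

Variable f0 : {ffun T -> 'I_n}.
Hypothesis f0hom : is_homb eT (@Kedge n) f0.
Hypothesis f0inv : forall gam : T -> T, is_aut eT gam ->
  hom_conn eT (@Kedge n) f0 [ffun x => f0 (gam x)].

Lemma homL (f : {ffun T -> 'I_n}) u v : is_homb eT (@Kedge n) f -> eT u v -> f u != f v.
Proof. by move/homP => H huv; exact: H. Qed.

Lemma adjL (f g : {ffun T -> 'I_n}) u v : hom_adj eT (@Kedge n) f g -> eT u v -> f u != g v.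
Proof.
case/and3P => hf hg /cards1P [x Ex] huv.
case: (eqVneq (g v) (f v)) => [->|hv]; first exact: homL.
case: (eqVneq (g u) (f u)) => [<-|hu]; first exact: homL.
have : u \in [set x] by rewrite -Ex inE eq_sym.
have : v \in [set x] by rewrite -Ex inE eq_sym.
by rewrite !inE => /eqP ev /eqP eu; move: huv; rewrite eu ev (negbTE (noloop x)).
Qed.

Lemma color_exists : exists kap : VV -> 'I_n, is_hom eG (@Kedge n) kap.
Proof.
have Hp : forall g : {ffun T -> T}, exists p : seq {ffun T -> 'I_n},
    [&& path (hom_adj eT (@Kedge n)) f0 p, size p <= K &
        homb g ==> (last f0 p == [ffun x => f0 (g x)])].
  move=> g; case hg: (homb g); last by exists [::].
  have hc : hom_conn eT (@Kedge n) f0 [ffun x => f0 (g x)].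
    by apply: f0inv; apply: hEA => u v huv; exact: homb_hom.
  case/connectP: hc => p hp hl.
  move: hl; case: (shortenP hp) => p' hp' hu _ hl.
  exists p'; rewrite hp' /= -hl eqxx andbT.
  have : size (f0 :: p') <= #|{ffun T -> 'I_n}|.
    by move/card_uniqP: hu => <-; apply: max_card.
  by move: hK => /=; lia.
have [P HP] := fin_all_exists Hp.
pose Q g j := nth (last f0 (P g)) (f0 :: P g) j.
have Qhom : forall g j, is_homb eT (@Kedge n) (Q g j).
  move=> g j; have /and3P [hp _ _] := HP g.
  have Hin : forall i, i < size (P g) -> is_homb eT (@Kedge n) (nth (last f0 (P g)) (P g) i).
    by move=> i hi; move/pathP: hp => /(_ (last f0 (P g)) i hi) /and3P [].
  case: j => [|j]; first exact: f0hom.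
  rewrite /Q /=; case: (ltnP j (size (P g))) => hj; first exact: Hin.
  rewrite nth_default //.
  case E: (P g) => [|a l] //; rewrite -E.
  rewrite -nth_last (set_nth_default (last f0 (P g))); last by rewrite E /=; lia.
  apply: Hin; rewrite E /=; lia.
have QL : forall g j j', (j' = j \/ j' = j.+1 \/ j = j'.+1) ->
    forall u v, eT u v -> Q g j u != Q g j' v.
  have fwd : forall g j u v, eT u v -> Q g j u != Q g j.+1 v.
    move=> g j u v huv; have /and3P [hp _ _] := HP g.
    case: (ltnP j (size (P g))) => hj.
      move/pathP: hp => /(_ (last f0 (P g)) j hj) hadj.
      exact: adjL hadj huv.
    have -> : Q g j.+1 = Q g j.
      rewrite /Q nth_default; last by rewrite /= ltnS.
      case: (eqVneq j (size (P g))) => [->|Ej].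
        by rewrite -[size (P g)]/((size (f0 :: P g)).-1) nth_last.
      by rewrite nth_default //=; lia.
    exact: homL (Qhom g j) huv.
  move=> g j j' [->|[->|->]] u v huv.
  - exact: homL (Qhom g j) huv.
  - exact: fwd.
  - by rewrite eq_sym; apply: fwd; rewrite sT.
have Qlast : forall g, homb g -> Q g kk = [ffun x => f0 (g x)].
  move=> g hg; have /and3P [_ hs /implyP /(_ hg) /eqP hl] := HP g.
  by rewrite /Q nth_default //= ltnS; lia.
have Q0 : forall g, Q g 0 = f0 by [].
pose kap (x : VV) : 'I_n := let: (s, d) := x in
  if d is Some (g, i) then Q g i.+1 s else f0 s.
have SN : forall s s' g (i : 'I_kk), eG (s, Some (g, i)) (s', None) -> kap (s, Some (g, i)) != kap (s', None).
  move=> s s' g i /= /orP [/andP [/eqP i0 he]|/and3P [/eqP ik hg he]].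
    by rewrite i0 -(Q0 g); apply: (QL g 1 0) => //; right; right.
  rewrite ik Qlast // ffunE; exact: homL f0hom he.
exists kap => [[s d] [s' d']].
case: d => [[g i]|]; case: d' => [[g' i']|] => he.
- move: he => /= /and3P [/eqP eg hii he]; subst g'; apply: QL => //.
  move: hii => /orP [/orP [/eqP E|/eqP E]|/eqP E]; lia.
- exact: SN.
- by rewrite /Kedge eq_sym; apply: SN; rewrite eG_sym.
- by move: he => /= he; exact: homL f0hom he.
Qed.

End Main.

Theorem theorem3p1 (T : finType) (eT : rel T) (n : nat) :
  sym_graph eT ->
  (forall g : T -> T, is_hom eT eT g -> is_aut eT g) ->
  chromatic eT n ->
  (exists f : {ffun T -> 'I_n}, is_homb eT (@Kedge n) f /\
     forall gam : T -> T, is_aut eT gam ->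
     forall g : {ffun T -> 'I_n}, hom_conn eT (@Kedge n) f g ->
       hom_conn eT (@Kedge n) f [ffun x => g (gam x)]) ->
  exists (G : finType) (eG : rel G),
    [/\ sym_graph eG, chromatic eG n & hom_connected eT eG].
Proof.
move=> sT hEA [[fc hfc] hmin] [f0 [f0hom f0inv]].
have noloop : forall x, ~~ eT x x.
  by move=> x; apply/negP => hx; move: (hfc x x hx); rewrite /Kedge eqxx.
have hK : #|T| + #|{ffun T -> 'I_n}| + 2 <= #|T| + #|{ffun T -> 'I_n}| + 2 := leqnn _.
have f0inv' : forall gam, is_aut eT gam -> hom_conn eT (@Kedge n) f0 [ffun x => f0 (gam x)].
  by move=> gam hg; apply: f0inv => //; apply: connect0.
have hε : is_homb eT (eG eT (K := #|T| + #|{ffun T -> 'I_n}| + 2)) [ffun t => (t, None)].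
  by apply/homP => u v huv; rewrite !ffunE.
exists (VV T (#|T| + #|{ffun T -> 'I_n}| + 2)), (eG eT (K := #|T| + #|{ffun T -> 'I_n}| + 2)).
split.
- exact: eG_sym.
- split; first exact: (color_exists sT noloop hK hEA f0hom f0inv').
  move=> m g hg; apply: hmin (fun t => g (t, None)) _.
  by move=> u v huv; apply: hg.
- split; first by exists [ffun t => (t, None)].
  move=> f g hf hg.
  apply: hom_conn_trans (all_conn sT noloop hK hEA hf) _.
  by rewrite hom_conn_sym; apply: (all_conn sT noloop hK hEA hg).
Qed.
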